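(* Let $G$ be a finitely generated group, $H$ a finitely generated subgroup, $A$ a finite alphabet, $S\subseteq H$ finite and $\mu:A^S\to A$. Let $\Phi_H:A^H\to A^H$ and $\Phi_G:A^G\to A^G$ be the cellular automata defined by $\Phi_H(x)(h)=\mu(s\mapsto x(hs))$ and $\Phi_G(x)(g)=\mu(s\mapsto x(gs))$. If $\Phi_G$ has an equicontinuity point, then so does $\Phi_H$.
   Context: Metrics: fix a finite generating set $E_H$ of $H$ closed under inverses and a finite generating set $D\supseteq E_H$ of $G$ closed under inverses, with word metrics $d_H$, $d_G$. The Cantor metric on $A^H$ is $d^H(x,y)=2^{-k}$ with $k=\min\{d_H(1,h):x(h)\neq y(h)\}$, and on $A^G$ similarly $d^G$ using $d_G$; $B^H$, $B^G$ denote closed balls. A configuration $x$ is an equicontinuity point of a map $\Phi$ on such a space with balls $B$ if $\forall\epsilon>0\,\exists\delta>0\,\forall t\in\mathbb{N}$, $\Phi^t(B(x,\delta))\subseteq B(\Phi^t(x),\epsilon)$. (This notion does not depend on the choice of generating sets.) *)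

(* Defs.v *)
From Stdlib Require Import Reals List.
Import ListNotations.
Open Scope R_scope.
Set Implicit Arguments.

Record IsGroup (G : Type) (mul : G -> G -> G) (one : G) (inv : G -> G) : Prop := {
  grp_assoc : forall a b c, mul a (mul b c) = mul (mul a b) c;
  grp_one_l : forall a, mul one a = a;
  grp_one_r : forall a, mul a one = a;
  grp_inv_l : forall a, mul (inv a) a = one;
  grp_inv_r : forall a, mul a (inv a) = one }.

Record IsSubgroup (G : Type) (mul : G -> G -> G) (one : G) (inv : G -> G)
    (H : G -> Prop) : Prop := {
  sub_one : H one;
  sub_mul : forall a b, H a -> H b -> H (mul a b);
  sub_inv : forall a, H a -> H (inv a) }.

Definition is_word (G : Type) (mul : G -> G -> G) (one : G) (E : list G)
    (g : G) (n : nat) : Prop :=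
  exists l : list G, length l = n /\ (forall e, In e l -> In e E) /\
                     fold_right mul one l = g.

Definition word_len (G : Type) (mul : G -> G -> G) (one : G) (E : list G)
    (g : G) (k : nat) : Prop :=
  is_word mul one E g k /\ forall n, is_word mul one E g n -> (k <= n)%nat.

Definition gen_set (G : Type) (mul : G -> G -> G) (one : G) (inv : G -> G)
    (H : G -> Prop) (E : list G) : Prop :=
  (forall e, In e E -> H e) /\ (forall e, In e E -> In (inv e) E) /\
  (forall h, H h -> exists n, is_word mul one E h n).

(* Cantor metric on A^X, X a domain with length function wl (wl x k means
   d(1,x) = k):  d(x,y) = 2^{-k}, k = min { d(1,h) : x h <> y h } (and 0 if
   x = y).  [cantor_le wl x y delta] means d(x,y) <= delta, i.e. y is in the
   closed ball B(x,delta); unfolded: every disagreement h has 2^{-d(1,h)} <= delta. *)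
Definition cantor_le (X A : Type) (wl : X -> nat -> Prop) (x y : X -> A)
    (delta : R) : Prop :=
  0 <= delta /\ forall h k, x h <> y h -> wl h k -> (/2) ^ k <= delta.

Definition equicontinuity_point (X A : Type) (wl : X -> nat -> Prop)
    (Phi : (X -> A) -> (X -> A)) (x : X -> A) : Prop :=
  forall eps, 0 < eps -> exists delta, 0 < delta /\
    forall (t : nat) (y : X -> A), cantor_le wl x y delta ->
      cantor_le wl (Nat.iter t Phi x) (Nat.iter t Phi y) eps.

Definition has_equicontinuity_point (X A : Type) (wl : X -> nat -> Prop)
    (Phi : (X -> A) -> (X -> A)) : Prop :=
  exists x, equicontinuity_point wl Phi x.


Definition PhiG (G A : Type) (mul : G -> G -> G) (S : list G)
    (mu : ({ s : G | In s S } -> A) -> A) (x : G -> A) : G -> A :=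
  fun g => mu (fun s => x (mul g (proj1_sig s))).

Definition PhiH (G A : Type) (mul : G -> G -> G) (H : G -> Prop)
    (hmul : forall a b, H a -> H b -> H (mul a b))
    (S : list G) (hS : forall s, In s S -> H s)
    (mu : ({ s : G | In s S } -> A) -> A) (x : { h : G | H h } -> A)
    : { h : G | H h } -> A :=
  fun h => mu (fun s => x (exist H (mul (proj1_sig h) (proj1_sig s))
                   (hmul _ _ (proj2_sig h) (hS _ (proj2_sig s))))).

(* Main.v *)
Require Import Defs.
From Stdlib Require Import Reals List Lia Lra.
From Stdlib Require Import Classical ClassicalEpsilon FunctionalExtensionality ProofIrrelevance.
Import ListNotations.
Open Scope R_scope.

Lemma half_pow_pos n : 0 < (/2) ^ n.
Proof. apply pow_lt; lra. Qed.

Lemma half_pow_le_add d n : (/2) ^ (n + d) <= (/2) ^ n.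
Proof.
  induction d.
  - rewrite Nat.add_0_r; lra.
  - rewrite Nat.add_succ_r. simpl. pose proof (half_pow_pos (n + d)). lra.
Qed.

Lemma half_pow_anti m n : (m <= n)%nat -> (/2) ^ n <= (/2) ^ m.
Proof. intro Hle. replace n with (m + (n - m))%nat by lia. apply half_pow_le_add. Qed.

Lemma nat_min_exists (P : nat -> Prop) : (exists n, P n) -> exists k, P k /\ forall n, P n -> (k <= n)%nat.
Proof.
  intros [n Hn].
  revert Hn. induction n as [n IH] using (well_founded_induction Wf_nat.lt_wf). intro Hn.
  destruct (classic (exists j, (j < n)%nat /\ P j)) as [[j [Hj Pj]]|Hno].
  - exact (IH j Hj Pj).
  - exists n. split; [exact Hn|]. intros m Pm.
    destruct (Nat.le_gt_cases n m); [assumption|].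
    exfalso; apply Hno; eauto.
Qed.

Lemma word_len_exists G (mul : G -> G -> G) one E g n :
  is_word mul one E g n -> exists k, word_len mul one E g k /\ (k <= n)%nat.
Proof.
  intro Hw. destruct (nat_min_exists (fun m => is_word mul one E g m)) as [k [Hk Hmin]].
  { eauto. }
  exists k. split; [split; assumption| apply Hmin; exact Hw].
Qed.

Lemma is_word_mono G (mul : G -> G -> G) one E E' g n :
  (forall e, In e E -> In e E') -> is_word mul one E g n -> is_word mul one E' g n.
Proof. intros HE [l [Hl [Hin Hf]]]. exists l; auto. Qed.

Fixpoint allwords {G} (D : list G) (n : nat) : list (list G) :=
  match n with
  | O => [[]]
  | S n => [] :: flat_map (fun e => map (cons e) (allwords D n)) D
  end.

Lemma allwords_spec {G} (D : list G) n l :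
  (length l <= n)%nat -> (forall e, In e l -> In e D) -> In l (allwords D n).
Proof.
  revert l; induction n; intros l Hl HD.
  - destruct l; simpl in *; [auto| lia].
  - destruct l as [|a l]; simpl; [auto|]. right.
    apply in_flat_map. exists a. split; [apply HD; simpl; auto|].
    apply in_map. apply IHn; simpl in *; [lia|]. intros; apply HD; auto.
Qed.

Lemma list_bound G (mul : G -> G -> G) one (H : G -> Prop) EH (L : list (list G)) :
  (forall h, H h -> exists n, is_word mul one EH h n) ->
  exists M, forall l, In l L -> H (fold_right mul one l) ->
     exists m, is_word mul one EH (fold_right mul one l) m /\ (m <= M)%nat.
Proof.
  intro Hgen. induction L as [|l L IH].
  - exists O. intros l [].
  - destruct IH as [M HM].
    destruct (classic (H (fold_right mul one l))) as [Hl|Hl].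
    + destruct (Hgen _ Hl) as [m Hm].
      exists (Nat.max M m). intros l' [<-|Hin] Hl'.
      * exists m; split; [auto| lia].
      * destruct (HM l' Hin Hl') as [m' [? ?]]. exists m'; split; [auto|lia].
    + exists M. intros l' [<-|Hin] Hl'; [contradiction|]. auto.
Qed.

Lemma ball_bound G (mul : G -> G -> G) one (H : G -> Prop) EH D N :
  (forall h, H h -> exists n, is_word mul one EH h n) ->
  exists M, forall g k, H g -> is_word mul one D g k -> (k <= N)%nat ->
     exists m, word_len mul one EH g m /\ (m <= M)%nat.
Proof.
  intro Hgen. destruct (list_bound G mul one H EH (allwords D N) Hgen) as [M HM].
  exists M. intros g k Hg [l [Hl [HD Hf]]] HkN. subst g.
  destruct (HM l (allwords_spec D N l ltac:(lia) HD) Hg) as [m [Hm HmM]].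
  destruct (word_len_exists _ _ _ _ _ _ Hm) as [k' [Hk' Hk'm]]. exists k'; split; [auto|lia].
Qed.

Theorem proposition5
  (G : Type) (mul : G -> G -> G) (one : G) (inv : G -> G)
  (hG : IsGroup mul one inv)
  (H : G -> Prop) (hH : IsSubgroup mul one inv H)
  (EH D : list G)
  (hEH : gen_set mul one inv H EH)
  (hD : gen_set mul one inv (fun _ => True) D)
  (hEHD : forall e, In e EH -> In e D)
  (A : Type) (hA : exists l : list A, forall a, In a l)
  (S : list G) (hS : forall s, In s S -> H s)
  (mu : ({ s : G | In s S } -> A) -> A) :
  has_equicontinuity_point (word_len mul one D) (@PhiG G A mul S mu) ->
  has_equicontinuity_point
    (fun h : { h : G | H h } => word_len mul one EH (proj1_sig h))
    (@PhiH G A mul H (sub_mul hH) S hS mu).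
Proof.
  intros [x Hx].
  assert (Hcomm : forall t (z : G -> A),
    Nat.iter t (@PhiH G A mul H (sub_mul hH) S hS mu) (fun h => z (proj1_sig h))
    = fun h => Nat.iter t (@PhiG G A mul S mu) z (proj1_sig h)).
  { induction t; intro z; [reflexivity|]. simpl. rewrite IHt. reflexivity. }
  exists (fun h => x (proj1_sig h)).
  intros eps Heps.
  destruct (Hx eps Heps) as [delta [Hdelta Hd]].
  destruct (pow_lt_1_zero (/2) ltac:(rewrite Rabs_pos_eq; lra) delta Hdelta) as [N HN].
  destruct hEH as [_ [_ HgenH]].
  destruct (ball_bound G mul one H EH D N HgenH) as [M HM].
  exists ((/2) ^ (Datatypes.S M)). split; [apply half_pow_pos|].
  intros t y' [_ Hy'].
  set (y := fun g => match excluded_middle_informative (H g) with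
                     | left p => y' (exist H g p)
                     | right _ => x g end).
  assert (Hry : y' = fun h => y (proj1_sig h)).
  { apply functional_extensionality. intros [g q]. unfold y; simpl.
    destruct (excluded_middle_informative (H g)) as [p|n]; [|contradiction].
    f_equal. f_equal. apply proof_irrelevance. }
  assert (Hxy : cantor_le (word_len mul one D) x y delta).
  { split; [lra|]. intros g k Hne Hk. unfold y in Hne.
    destruct (excluded_middle_informative (H g)) as [p|n]; [|contradiction].
    destruct (Rle_lt_dec ((/2) ^ k) delta) as [Hle|Hlt]; [exact Hle|exfalso].
    assert (HkN : (k <= N)%nat).
    { destruct (Nat.le_gt_cases k N) as [|HNk]; [assumption|].
      specialize (HN k ltac:(lia)). rewrite Rabs_pos_eq in HN by (apply Rlt_le, half_pow_pos). lra. }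
    destruct Hk as [Hk _].
    destruct (HM g k p Hk HkN) as [m [Hm HmM]].
    specialize (Hy' (exist H g p) m Hne Hm).
    pose proof (half_pow_anti _ _ HmM).
    simpl in Hy'. pose proof (half_pow_pos M). lra. }
  specialize (Hd t y Hxy) as [_ Hd].
  rewrite Hry, !Hcomm. split; [lra|].
  intros [g q] k Hne Hk. simpl in *.
  destruct Hk as [Hk _].
  destruct (word_len_exists _ _ _ _ _ _ (is_word_mono _ _ _ _ _ _ _ hEHD Hk)) as [k' [Hk' Hk'k]].
  specialize (Hd g k' Hne Hk').
  pose proof (half_pow_anti _ _ Hk'k). lra.
Qed.
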